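(* Let $S\subset \mathbb{R}^2$ be such that both $S$ and $S^\mathsf{c}$ satisfy the $r$-rolling condition. Fix $\alpha\in (0,r)$ and $0<t \leq \min\{\alpha, 2\alpha^2/r\}$. There is a constant $A > 0$ depending only on $(r,\alpha)$ such that, for any $z \notin S$ with $0<\alpha -\operatorname{dist}(z, S)\leq t/A$ and any $x_1, x_2 \in \partial B(z, \alpha) \cap S$, we have \[ [x_1 x_2] \subset B(\partial S, t), \qquad \|x_1 -x_2\| \leq \sqrt{t}, \qquad \angle( [x_1 x_2], \partial S ) \leq \sqrt{t}. \]
   Context: A set $T\subset\mathbb{R}^2$ satisfies the $r$-rolling condition ($r>0$) if for every $x \in \partial T$ there is an open ball $B$ of radius $r$ with $B \cap T = \emptyset$ and $x \in \partial B$; when $S$ and $S^\mathsf{c}=\mathbb{R}^2\setminus S$ both satisfy it, $\partial S$ has a tangent line at every point and the metric projection $P_{\partial S}(x)$ (the nearest point of $\partial S$ to $x$) is unique whenever $\operatorname{dist}(x,\partial S)<r$. $B(z,\alpha)$ is the open ball of center $z$ and radius $\alpha$; $B(T,\varepsilon)=\{x:\operatorname{dist}(x,T)<\varepsilon\}$; $[x_1x_2]$ is the closed segment. For a curve $C$ (differentiable almost everywhere) and a curve $D$ with $C\subset B(D,r)$ and unique projections, the deviation angle is $\angle(C,D)=\sup_{x\in C}\angle(\vec C_x,\vec D_{P_D(x)})$, where $\vec C_x$ is the tangent line of $C$ at $x$ and the angle between two lines lies in $[0,\pi/2]$. (For a segment, the tangent is the line containing it.) *)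

(* Defs.v *)
From Stdlib Require Import Reals.
From Coquelicot Require Import Coquelicot.
Open Scope R_scope.

Definition pt : Type := (R * R)%type.

Definition psub (x y : pt) : pt := (fst x - fst y, snd x - snd y).
Definition dot (u v : pt) : R := fst u * fst v + snd u * snd v.
Definition enorm (u : pt) : R := sqrt (dot u u).
Definition edist (x y : pt) : R := enorm (psub x y).

Definition compl (S : pt -> Prop) : pt -> Prop := fun x => ~ S x.

Definition boundary (T : pt -> Prop) (x : pt) : Prop :=
  forall eps : R, 0 < eps ->
    (exists y, T y /\ edist x y < eps) /\ (exists y, ~ T y /\ edist x y < eps).

Definition oball (c : pt) (a : R) (x : pt) : Prop := edist x c < a.
Definition sphere (c : pt) (a : R) (x : pt) : Prop := edist x c = a.

Definition rolling (r : R) (T : pt -> Prop) : Prop :=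
  forall x, boundary T x ->
    exists c : pt, (forall y, oball c r y -> ~ T y) /\ sphere c r x.

(* dist(x, T) = inf { ||x - y|| : y in T } (meaningful for nonempty T) *)
Definition setdist (x : pt) (T : pt -> Prop) : R :=
  real (Glb_Rbar (fun d => exists y, T y /\ d = edist x y)).

Definition nbhd (T : pt -> Prop) (eps : R) (x : pt) : Prop :=
  exists y, T y /\ edist x y < eps.

Definition segment (x1 x2 : pt) (x : pt) : Prop :=
  exists l : R, 0 <= l <= 1 /\
    x = (fst x1 + l * (fst x2 - fst x1), snd x1 + l * (snd x2 - snd x1)).

Definition is_proj (D : pt -> Prop) (x p : pt) : Prop :=
  D p /\ forall q, D q -> edist x p <= edist x q.

(* the line through p with nonzero direction v is the tangent line of D at p:
   points q of D near p make a vanishing angle with the line *)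
Definition tangent_dir (D : pt -> Prop) (p v : pt) : Prop :=
  v <> (0, 0) /\ D p /\
  forall eps : R, 0 < eps -> exists delta : R, 0 < delta /\
    forall q, D q -> 0 < edist q p < delta ->
      Rabs (fst v * snd (psub q p) - snd v * fst (psub q p))
        <= eps * enorm v * edist q p.

Definition line_angle (u v : pt) : R :=
  acos (Rabs (dot u v) / (enorm u * enorm v)).

(* Main.v *)
Require Import Defs.
From Stdlib Require Import Reals Lra Psatz Classical.
From Coquelicot Require Import Coquelicot.
Open Scope R_scope.


Lemma cos_ub_eq a : cos_ub a = 1 - a^2/2 + a^4/24 - a^6/720 + a^8/40320.
Proof.
unfold cos_ub, cos_approx, cos_term. cbn [sum_f_R0 Nat.mul Nat.add].
rewrite !fact_simpl. rewrite !mult_INR. simpl INR. simpl pow.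
field. Qed.

Lemma dot_nonneg u : 0 <= dot u u.
Proof. unfold dot; nra. Qed.

Lemma enorm_nonneg u : 0 <= enorm u.
Proof. apply sqrt_pos. Qed.

Lemma enorm_sq u : enorm u * enorm u = dot u u.
Proof. unfold enorm; apply sqrt_sqrt, dot_nonneg. Qed.

Lemma enorm_le u b : 0 <= b -> dot u u <= b*b -> enorm u <= b.
Proof. intros. unfold enorm. rewrite <- (sqrt_square b) by lra. apply sqrt_le_1_alt; lra. Qed.

Lemma enorm_lt u b : 0 <= b -> dot u u < b*b -> enorm u < b.
Proof. intros. unfold enorm. rewrite <- (sqrt_square b) by lra. apply sqrt_lt_1_alt.
 split; [apply dot_nonneg|lra]. Qed.

Lemma enorm_sq_le u b : enorm u <= b -> dot u u <= b*b.
Proof. intros. rewrite <- enorm_sq. pose proof (enorm_nonneg u). nra. Qed.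

Lemma enorm_sq_ge u b : 0 <= b -> b <= enorm u -> b*b <= dot u u.
Proof. intros. rewrite <- enorm_sq. nra. Qed.

Lemma abs_le_of_sq a b : 0 <= b -> a*a <= b*b -> Rabs a <= b.
Proof. intros. unfold Rabs; destruct (Rcase_abs a); nra. Qed.

Lemma cauchy_schwarz u v : Rabs (dot u v) <= enorm u * enorm v.
Proof.
  apply abs_le_of_sq.
  - pose proof (enorm_nonneg u); pose proof (enorm_nonneg v); nra.
  - replace (enorm u * enorm v * (enorm u * enorm v)) with
      ((enorm u * enorm u) * (enorm v * enorm v)) by ring.
    rewrite !enorm_sq. destruct u as [u1 u2], v as [v1 v2]; unfold dot; simpl.
    pose proof (pow2_ge_0 (u1*v2-u2*v1)); nra.
Qed.

Lemma dot_le_enorm u v : dot u v <= enorm u * enorm v.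
Proof. pose proof (cauchy_schwarz u v). pose proof (Rle_abs (dot u v)). lra. Qed.

Definition padd (u v : pt) : pt := (fst u + fst v, snd u + snd v).

Lemma enorm_tri u v : enorm (padd u v) <= enorm u + enorm v.
Proof.
  apply enorm_le. pose proof (enorm_nonneg u); pose proof (enorm_nonneg v); lra.
  pose proof (dot_le_enorm u v). pose proof (enorm_sq u). pose proof (enorm_sq v).
  destruct u as [u1 u2], v as [v1 v2]; unfold dot, padd in *; simpl in *. nra.
Qed.

Lemma edist_tri x y w : edist x w <= edist x y + edist y w.
Proof.
  unfold edist. replace (psub x w) with (padd (psub x y) (psub y w)).
  apply enorm_tri. destruct x, y, w; unfold padd, psub; simpl; f_equal; ring.
Qed.

Lemma edist_sym x y : edist x y = edist y x.
Proof. unfold edist, enorm, dot, psub; simpl. f_equal. ring. Qed.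

Lemma edist_nonneg x y : 0 <= edist x y.
Proof. apply enorm_nonneg. Qed.

Definition dd (x y : pt) : R := dot (psub x y) (psub x y).

Lemma edist_sq x y : edist x y * edist x y = dd x y.
Proof. apply enorm_sq. Qed.

Lemma edist_le x y b : 0 <= b -> dd x y <= b*b -> edist x y <= b.
Proof. apply enorm_le. Qed.

Lemma edist_lt x y b : 0 <= b -> dd x y < b*b -> edist x y < b.
Proof. apply enorm_lt. Qed.

Lemma edist_sq_le x y b : edist x y <= b -> dd x y <= b*b.
Proof. apply enorm_sq_le. Qed.

Lemma edist_sq_ge x y b : 0 <= b -> b <= edist x y -> b*b <= dd x y.
Proof. apply enorm_sq_ge. Qed.

Lemma edist_eq_sq x y b : edist x y = b -> dd x y = b*b.
Proof. intros <-. symmetry; apply edist_sq. Qed.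

Definition aff (a b : pt) (l : R) : pt :=
  (fst a + l * (fst b - fst a), snd a + l * (snd b - snd a)).

Lemma dd_aff a b l m : dd (aff a b l) (aff a b m) = (l - m)^2 * dd a b.
Proof. destruct a, b; unfold dd, aff, dot, psub; simpl; ring. Qed.

Lemma edist_aff a b l m : edist (aff a b l) (aff a b m) = Rabs (l - m) * edist a b.
Proof.
  unfold edist at 1, enorm. fold (dd (aff a b l) (aff a b m)). rewrite dd_aff.
  rewrite sqrt_mult_alt by (apply pow2_ge_0).
  rewrite <- Rsqr_pow2, sqrt_Rsqr_abs. reflexivity.
Qed.


Lemma disj_balls a b ra rb : 0 < ra -> 0 < rb ->
  (forall y, oball a ra y -> oball b rb y -> False) -> ra + rb <= edist a b.
Proof.
  intros Ha Hb H. destruct (Rle_lt_dec (ra + rb) (edist a b)) as [|Hlt]; [auto|].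
  exfalso. set (k := ra / (ra + rb)). apply (H (aff a b k)).
  - unfold oball. apply edist_lt; [lra|].
    assert (E: dd (aff a b k) a = k^2 * dd a b) by (destruct a, b; unfold dd, aff, dot, psub; simpl; ring).
    rewrite E, <- edist_sq. pose proof (edist_nonneg a b).
    assert (k * edist a b < ra).
    { unfold k. apply Rmult_lt_reg_l with (ra + rb); [lra|].
      replace ((ra+rb)*(ra/(ra+rb)*edist a b)) with (ra*edist a b) by (field; lra). nra. }
    assert (0 <= k) by (unfold k; apply Rle_mult_inv_pos; lra).
    replace (k^2*(edist a b * edist a b)) with ((k*edist a b)*(k*edist a b)) by ring.
    assert (0 <= k * edist a b) by (apply Rmult_le_pos; lra). nra.
  - unfold oball. apply edist_lt; [lra|].
    assert (E: dd (aff a b k) b = (1-k)^2 * dd a b) by (destruct a, b; unfold dd, aff, dot, psub; simpl; ring).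
    rewrite E, <- edist_sq. pose proof (edist_nonneg a b).
    assert ((1-k) * edist a b < rb).
    { unfold k. replace (1 - ra/(ra+rb)) with (rb/(ra+rb)) by (field; lra).
      apply Rmult_lt_reg_l with (ra + rb); [lra|].
      replace ((ra+rb)*(rb/(ra+rb)*edist a b)) with (rb*edist a b) by (field; lra). nra. }
    assert (0 <= 1 - k).
    { unfold k. replace (1 - ra/(ra+rb)) with (rb/(ra+rb)) by (field; lra).
      apply Rle_mult_inv_pos; lra. }
    replace ((1-k)^2*(edist a b * edist a b)) with (((1-k)*edist a b)*((1-k)*edist a b)) by ring.
    assert (0 <= (1-k) * edist a b) by (apply Rmult_le_pos; lra). nra.
Qed.

Lemma sq0 x : x^2 = 0 -> x = 0.
Proof. intros H. destruct (Req_dec x 0); auto. pose proof (pow_nonzero x 2 H0). lra. Qed.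

Definition pm (p : pt) (r : R) (n : pt) : pt := (fst p - r * fst n, snd p - r * snd n).
Definition pp (p : pt) (r : R) (n : pt) : pt := (fst p + r * fst n, snd p + r * snd n).

Lemma bnd_compl S p : boundary S p -> boundary (compl S) p.
Proof.
  intros H eps He. destruct (H eps He) as [[y1 [H1 H1']] [y2 [H2 H2']]].
  split; [exists y2 | exists y1]; unfold compl; split; auto.
Qed.

Lemma normal_exists r S p : 0 < r -> rolling r S -> rolling r (compl S) -> boundary S p ->
  exists n, dot n n = 1 /\ (forall y, oball (pm p r n) r y -> ~ S y) /\
            (forall y, oball (pp p r n) r y -> S y).
Proof.
  intros Hr HS HC Hb.
  destruct (HS p Hb) as [c [Hc1 Hc2]].
  destruct (HC p (bnd_compl S p Hb)) as [c' [Hc1' Hc2']].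
  assert (Hd : r + r <= edist c c').
  { apply disj_balls; auto. intros y H1 H2. apply (Hc1' y H2). unfold compl. apply Hc1; auto. }
  unfold sphere in Hc2, Hc2'. apply edist_eq_sq in Hc2. apply edist_eq_sq in Hc2'.
  apply edist_sq_ge in Hd; [|lra].
  destruct c as [c1 c2], c' as [d1 d2], p as [p1 p2]. unfold dd, dot, psub in *; simpl in *.
  assert (Z : (c1 + d1 - 2 * p1)^2 + (c2 + d2 - 2*p2)^2 <= 0) by nra.
  assert (E1 : c1 + d1 = 2 * p1).
  { pose proof (pow2_ge_0 (c1 + d1 - 2 * p1)); pose proof (pow2_ge_0 (c2 + d2 - 2 * p2)).
    assert ((c1 + d1 - 2 * p1)^2 = 0) by lra. apply sq0 in H1; lra. }
  assert (E2 : c2 + d2 = 2 * p2).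
  { pose proof (pow2_ge_0 (c1 + d1 - 2 * p1)); pose proof (pow2_ge_0 (c2 + d2 - 2 * p2)).
    assert ((c2 + d2 - 2 * p2)^2 = 0) by lra. apply sq0 in H1; lra. }
  exists ((d1 - p1)/r, (d2 - p2)/r). unfold dot; simpl. split.
  { replace ((d1 - p1) / r * ((d1 - p1) / r) + (d2 - p2) / r * ((d2 - p2) / r)) with
     (((p1-d1)*(p1-d1)+(p2-d2)*(p2-d2))/(r*r)) by (field; lra). rewrite Hc2'. field; lra. }
  assert (Pc : pm (p1,p2) r ((d1 - p1)/r, (d2 - p2)/r) = (c1, c2)).
  { unfold pm; simpl. f_equal; field_simplify; lra. }
  assert (Pd : pp (p1,p2) r ((d1 - p1)/r, (d2 - p2)/r) = (d1, d2)).
  { unfold pp; simpl. f_equal; field_simplify; lra. }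
  rewrite Pc, Pd. split; auto.
  intros y Hy. apply NNPP. intro Hn. exact (Hc1' y Hy Hn).
Qed.

Lemma normal_lip r S p n p' n' : 0 < r -> dot n n = 1 -> dot n' n' = 1 ->
  (forall y, oball (pm p r n) r y -> ~ S y) -> (forall y, oball (pp p r n) r y -> S y) ->
  (forall y, oball (pm p' r n') r y -> ~ S y) -> (forall y, oball (pp p' r n') r y -> S y) ->
  r * r * dd n n' <= dd p p'.
Proof.
  intros Hr Hn Hn' O1 I1 O2 I2.
  assert (A1 : r + r <= edist (pm p r n) (pp p' r n')).
  { apply disj_balls; auto. intros y Y1 Y2. exact (O1 y Y1 (I2 y Y2)). }
  assert (A2 : r + r <= edist (pm p' r n') (pp p r n)).
  { apply disj_balls; auto. intros y Y1 Y2. exact (O2 y Y1 (I1 y Y2)). }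
  apply edist_sq_ge in A1; [|lra]. apply edist_sq_ge in A2; [|lra].
  destruct p as [p1 p2], n as [n1 n2], p' as [q1 q2], n' as [m1 m2].
  unfold dd, dot, psub, pm, pp in *; simpl in *. nra.
Qed.

Lemma bnd_far S z d p : boundary S p -> (forall y, S y -> d <= edist z y) -> d <= edist z p.
Proof.
  intros Hb H. destruct (Rle_lt_dec d (edist z p)) as [|Hlt]; auto. exfalso.
  destruct (Hb (d - edist z p)) as [[y [Hy1 Hy2]] _]; [lra|].
  pose proof (H y Hy1). pose proof (edist_tri z p y). lra.
Qed.

Lemma setdist_lb S z y0 : S y0 -> forall y, S y -> setdist z S <= edist z y.
Proof.
  intros H0 y Hy. unfold setdist.
  set (E := fun d => exists y, S y /\ d = edist z y).
  destruct (Glb_Rbar_correct E) as [Hlb Hgr].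
  assert (L0 : Rbar_le (Finite 0) (Glb_Rbar E)).
  { apply Hgr. intros x [w [_ ->]]. simpl. apply edist_nonneg. }
  assert (L1 : Rbar_le (Glb_Rbar E) (Finite (edist z y))).
  { apply Hlb. exists y; auto. }
  destruct (Glb_Rbar E); simpl in *; tauto.
Qed.


Lemma aff0 a b : aff a b 0 = a.
Proof. destruct a, b; unfold aff; simpl; f_equal; ring. Qed.
Lemma aff1 a b : aff a b 1 = b.
Proof. destruct a, b; unfold aff; simpl; f_equal; ring. Qed.

Lemma aff_close a b m l eps : 0 < eps -> Rabs (m - l) < eps / (edist a b + 1) ->
  edist (aff a b m) (aff a b l) < eps.
Proof.
  intros He H. rewrite edist_aff. pose proof (edist_nonneg a b). pose proof (Rabs_pos (m-l)).
  assert (Rabs (m - l) * (edist a b + 1) < eps).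
  { apply Rmult_lt_reg_r with (/ (edist a b + 1)).
    apply Rinv_0_lt_compat; lra.
    replace (Rabs (m - l) * (edist a b + 1) * / (edist a b + 1)) with (Rabs (m-l)) by (field; lra).
    exact H. }
  nra.
Qed.

Lemma seg_bnd S a b : ~ S a -> S b -> exists mu, 0 <= mu <= 1 /\ boundary S (aff a b mu).
Proof.
  intros Ha Hb.
  set (E := fun mu => 0 <= mu <= 1 /\ ~ S (aff a b mu)).
  assert (HB : bound E) by (exists 1; intros x [Hx _]; lra).
  assert (HE : exists x, E x) by (exists 0; split; [lra| rewrite aff0; auto]).
  destruct (completeness E HB HE) as [m [Hub Hl]].
  assert (m0 : 0 <= m) by (apply Hub; split; [lra|rewrite aff0; auto]).
  assert (m1 : m <= 1) by (apply Hl; intros x [Hx _]; lra).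
  exists m. split; [lra|]. intros eps He.
  set (eta := eps / (edist a b + 1)).
  assert (Heta : 0 < eta) by (unfold eta; pose proof (edist_nonneg a b);
    apply Rdiv_lt_0_compat; lra).
  destruct (classic (S (aff a b m))) as [Hm|Hm].
  - split.
    + exists (aff a b m). split; auto. unfold edist, enorm, dot, psub. simpl.
      replace (_ * _ + _ * _) with 0 by ring. rewrite sqrt_0. lra.
    + destruct (classic (exists mu, E mu /\ m - eta < mu)) as [[mu [Emu Hmu]]|Hno].
      * exists (aff a b mu). split; [apply Emu|]. apply aff_close; auto.
        pose proof (Hub mu Emu). rewrite Rabs_right by lra. fold eta. lra.
      * exfalso. assert (m <= m - eta); [|lra]. apply Hl. intros x Ex.
        destruct (Rle_lt_dec x (m - eta)); auto. exfalso. apply Hno. exists x; split; auto.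
  - assert (m < 1). { destruct (Req_dec m 1); [subst; rewrite aff1 in Hm; tauto|lra]. }
    set (mu := m + Rmin (eta/2) ((1-m)/2)).
    assert (Hmu : m < mu <= 1 /\ mu - m < eta).
    { unfold mu. pose proof (Rmin_l (eta/2) ((1-m)/2)). pose proof (Rmin_r (eta/2) ((1-m)/2)).
      assert (0 < Rmin (eta/2) ((1-m)/2)) by (apply Rmin_glb_lt; lra). lra. }
    split.
    + exists (aff a b mu). split.
      * apply NNPP. intro Hn. assert (mu <= m) by (apply Hub; split; [lra|auto]). lra.
      * apply aff_close; auto. rewrite Rabs_left by lra. fold eta. lra.
    + exists (aff a b m). split; auto. unfold edist, enorm, dot, psub. simpl.
      replace (_ * _ + _ * _) with 0 by ring. rewrite sqrt_0. lra.
Qed.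

Lemma ball_approach c R x D eta : 0 < eta <= R -> 0 <= D -> edist x c <= R + D ->
  exists y, edist y c < R /\ edist x y <= D + eta.
Proof.
  intros He HD Hx. set (th := (R - eta) / (R + D)).
  assert (th0 : 0 <= th) by (unfold th; apply Rle_mult_inv_pos; lra).
  assert (th1 : th * (R + D) = R - eta) by (unfold th; field; lra).
  exists (aff c x th). pose proof (edist_nonneg x c). split.
  - rewrite <- (aff0 c x) at 2. rewrite edist_aff. rewrite (edist_sym c x).
    rewrite Rabs_right by lra. replace (th - 0) with th by ring. nra.
  - rewrite <- (aff1 c x) at 1. rewrite edist_aff. rewrite (edist_sym c x).
    assert (th <= 1).
    { apply Rmult_le_reg_r with (R + D); lra. }
    rewrite Rabs_right by lra. nra.
Qed.

Lemma aff_dist_max a b mu x B : 0 <= mu <= 1 -> edist x a <= B -> edist x b <= B ->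
  edist x (aff a b mu) <= B.
Proof.
  intros Hm Ha Hb. pose proof (edist_nonneg x a).
  unfold edist at 1. 
  replace (psub x (aff a b mu)) with (padd (fst (psub x a) * (1-mu), snd (psub x a) * (1 - mu))
     (fst (psub x b) * mu, snd (psub x b) * mu)).
  2:{ destruct x, a, b; unfold padd, psub, aff; simpl; f_equal; ring. }
  eapply Rle_trans; [apply enorm_tri|].
  assert (forall u k, 0 <= k -> enorm (fst u * k, snd u * k) = k * enorm u).
  { intros [u1 u2] k Hk. unfold enorm, dot; simpl.
    replace (u1 * k * (u1 * k) + u2 * k * (u2 * k)) with ((k*k) * (u1*u1+u2*u2)) by ring.
    rewrite sqrt_mult_alt by nra. rewrite sqrt_square by lra. ring. }
  rewrite !H0 by lra. fold (edist x a) (edist x b). nra.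
Qed.


Lemma tangent_perp r S p n v : 0 < r -> dot n n = 1 ->
  (forall y, oball (pm p r n) r y -> ~ S y) -> (forall y, oball (pp p r n) r y -> S y) ->
  tangent_dir (boundary S) p v -> dot v n = 0.
Proof.
  intros Hr Hn HO HI [Hv0 [_ Ht]].
  destruct (Req_dec (dot v n) 0) as [|Hw]; auto. exfalso.
  set (w := dot v n) in *.
  set (nv := enorm v).
  assert (Hnv : 0 < nv).
  { unfold nv, enorm. apply sqrt_lt_R0. destruct v as [v1 v2]; unfold dot; simpl.
    destruct (Req_dec v1 0); destruct (Req_dec v2 0); [subst; tauto| nra | nra | nra]. }
  assert (Haw : 0 < Rabs w) by (apply Rabs_pos_lt; auto).
  set (eps := Rabs w / (8 * nv)).
  assert (Heps : 0 < eps) by (unfold eps; apply Rdiv_lt_0_compat; lra).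
  destruct (Ht eps Heps) as [dl [Hdl Hq]].
  set (h := Rmin (Rmin (dl/4) (r/2)) (r * Rabs w / (4 * nv))).
  assert (Hh : 0 < h /\ h <= dl/4 /\ h <= r/2 /\ h <= r * Rabs w / (4 * nv)).
  { unfold h. pose proof (Rmin_l (Rmin (dl/4) (r/2)) (r * Rabs w / (4 * nv))).
    pose proof (Rmin_r (Rmin (dl/4) (r/2)) (r * Rabs w / (4 * nv))).
    pose proof (Rmin_l (dl/4) (r/2)). pose proof (Rmin_r (dl/4) (r/2)).
    assert (0 < r * Rabs w / (4 * nv)) by (apply Rdiv_lt_0_compat; nra).
    assert (0 < Rmin (dl/4) (r/2)) by (apply Rmin_glb_lt; lra).
    assert (0 < h) by (apply Rmin_glb_lt; lra). unfold h in *. lra. }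
  destruct Hh as [Hh0 [Hh1 [Hh2 Hh3]]].
  assert (Hvv : nv * nv = dot v v) by apply enorm_sq.
  destruct p as [p1 p2], n as [n1 n2], v as [v1 v2]. unfold dot in Hn, Hvv, w; simpl in *.
  set (k := h * h / r).
  assert (Hk : 0 <= k /\ k * r = h * h) by (unfold k; split; [apply Rle_mult_inv_pos; nra|field; lra]).
  set (a := (p1 - h * n2 - k * n1, p2 + h * n1 - k * n2)).
  set (b := (p1 - h * n2 + k * n1, p2 + h * n1 + k * n2)).
  assert (Ha : ~ S a).
  { apply HO. unfold oball. apply edist_lt; [lra|]. unfold dd, dot, psub, pm, a; simpl.
    replace ((p1 - h * n2 - k * n1 - (p1 - r * n1)) * (p1 - h * n2 - k * n1 - (p1 - r * n1)) +
     (p2 + h * n1 - k * n2 - (p2 - r * n2)) * (p2 + h * n1 - k * n2 - (p2 - r * n2)))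
     with ((h*h + (r-k)*(r-k)) * (n1*n1+n2*n2)) by ring. rewrite Hn.
    assert (k < h) by nra. nra. }
  assert (Hb : S b).
  { apply HI. unfold oball. apply edist_lt; [lra|]. unfold dd, dot, psub, pp, b; simpl.
    replace ((p1 - h * n2 + k * n1 - (p1 + r * n1)) * (p1 - h * n2 + k * n1 - (p1 + r * n1)) +
     (p2 + h * n1 + k * n2 - (p2 + r * n2)) * (p2 + h * n1 + k * n2 - (p2 + r * n2)))
     with ((h*h + (r-k)*(r-k)) * (n1*n1+n2*n2)) by ring. rewrite Hn.
    assert (k < h) by nra. nra. }
  destruct (seg_bnd S a b Ha Hb) as [mu [Hmu Hq0]].
  set (s := (2 * mu - 1) * k).
  assert (Hs : Rabs s <= k).
  { unfold s. rewrite Rabs_mult. pose proof (Rabs_pos (2*mu-1)).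
    assert (Rabs (2 * mu - 1) <= 1) by (apply Rabs_le; lra). rewrite (Rabs_right k) by lra. nra. }
  assert (Eq : psub (aff a b mu) (p1, p2) = (- h * n2 + s * n1, h * n1 + s * n2)).
  { unfold psub, aff, a, b, s; simpl. f_equal; ring. }
  assert (Hd : dd (aff a b mu) (p1,p2) = h * h + s * s).
  { unfold dd. rewrite Eq. unfold dot; simpl.
    replace ((- h * n2 + s * n1) * (- h * n2 + s * n1) + (h * n1 + s * n2) * (h * n1 + s * n2))
      with ((h*h+s*s)*(n1*n1+n2*n2)) by ring. rewrite Hn. ring. }
  assert (Hkh : k <= h) by nra.
  assert (Hss : s * s <= k * k).
  { pose proof (Rabs_pos s). pose proof (Rsqr_abs s). unfold Rsqr in *. nra. }
  assert (Hqd : 0 < edist (aff a b mu) (p1,p2) <= 2 * h).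
  { split.
    - unfold edist, enorm. apply sqrt_lt_R0. fold (dd (aff a b mu) (p1,p2)). rewrite Hd. nra.
    - apply edist_le; [lra|]. rewrite Hd. nra. }
  specialize (Hq _ Hq0 ltac:(lra)). 
  assert (Eq1 : fst (aff a b mu) - p1 = - h * n2 + s * n1) by (unfold aff, a, b, s; simpl; ring).
  assert (Eq2 : snd (aff a b mu) - p2 = h * n1 + s * n2) by (unfold aff, a, b, s; simpl; ring).
  rewrite Eq1, Eq2 in Hq.
  fold nv in Hq.
  set (c := v1 * n2 - v2 * n1).
  assert (Hc : c * c <= nv * nv).
  { rewrite Hvv. unfold c. unfold w in *. pose proof (pow2_ge_0 (v1*n1+v2*n2)).
    replace (v1 * v1 + v2 * v2) with ((v1*v1+v2*v2)*(n1*n1+n2*n2)) by (rewrite Hn; ring). nra. }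
  assert (Hc' : Rabs c <= nv) by (apply abs_le_of_sq; lra).
  assert (EX : v1 * (h * n1 + s * n2) - v2 * (- h * n2 + s * n1) = h * w + s * c)
    by (unfold w, c; ring).
  rewrite EX in Hq.
  assert (Hsc : Rabs (s * c) <= k * nv).
  { rewrite Rabs_mult. pose proof (Rabs_pos s). pose proof (Rabs_pos c). nra. }
  assert (Hhw : h * Rabs w <= eps * nv * (2*h) + k * nv).
  { replace (h * Rabs w) with (Rabs (h * w + s * c - s * c)).
    2:{ replace (h * w + s * c - s * c) with (h * w) by ring. rewrite Rabs_mult, Rabs_right by lra. ring. }
    eapply Rle_trans. unfold Rminus. apply Rabs_triang. rewrite Rabs_Ropp.
    assert (eps * nv * edist (aff a b mu) (p1, p2) <= eps * nv * (2*h)).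
    { apply Rmult_le_compat_l; [nra|lra]. } lra. }
  assert (E1 : eps * nv = Rabs w / 8) by (unfold eps; field; lra).
  assert (E2 : k * nv <= h * (Rabs w / 4)).
  { assert (k * r <= h * (r * Rabs w / (4 * nv))) by nra.
    assert (k * nv * r <= h * (Rabs w / 4) * r).
    { replace (h * (Rabs w / 4) * r) with (h * (r * Rabs w / (4 * nv)) * nv) by (field; lra). nra. }
    nra. }
  nra.
Qed.


Definition E0c (r alpha : R) := 4 * alpha * (r + alpha) / r.

Lemma point_data r alpha d S z x : 0 < r -> 0 < alpha -> alpha / 2 <= d <= alpha ->
  rolling r S -> rolling r (compl S) -> ~ S z -> (forall y, S y -> d <= edist z y) ->
  sphere z alpha x -> S x ->
  exists mu n, 0 <= mu <= 1 /\ d <= mu * alpha /\ boundary S (aff z x mu) /\ dot n n = 1 /\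
    (forall y, oball (pm (aff z x mu) r n) r y -> ~ S y) /\
    (forall y, oball (pp (aff z x mu) r n) r y -> S y) /\
    2 * alpha * (alpha - dot (psub x z) n) <= E0c r alpha * (alpha - d).
Proof.
  intros Hr Ha Hd HS HC Hz Hlb Hx HSx.
  destruct (seg_bnd S z x Hz HSx) as [mu [Hmu Hb]].
  destruct (normal_exists r S _ Hr HS HC Hb) as [n [Hn [HO HI]]].
  exists mu, n.
  assert (Hrho : edist z (aff z x mu) = mu * alpha).
  { rewrite <- (aff0 z x) at 1. rewrite edist_aff, Rabs_left1 by lra. unfold sphere in Hx.
    rewrite edist_sym, Hx. ring. }
  assert (Hdr : d <= mu * alpha) by (rewrite <- Hrho; apply bnd_far with S; auto).
  do 6 (split; auto).
  (* inner ball disjoint from B(z,d) *)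
  assert (Hdq : d + r <= edist z (pp (aff z x mu) r n)).
  { apply disj_balls; [lra|lra|]. intros y Y1 Y2. apply HI in Y2. apply Hlb in Y2.
    unfold oball in Y1. rewrite edist_sym in Y1. lra. }
  apply edist_sq_ge in Hdq; [|lra].
  unfold sphere in Hx. apply edist_eq_sq in Hx.
  set (c := dot (psub x z) n).
  assert (Id : dd z (pp (aff z x mu) r n) = mu*mu * dd x z + 2 * r * mu * c + r * r * dot n n).
  { unfold c; destruct z, x, n; unfold dd, pp, aff, dot, psub; simpl; ring. }
  rewrite Id, Hx, Hn in Hdq.
  assert (Hra : mu * alpha <= alpha) by nra.
  assert (H1 : 2 * r * mu * (alpha - c) <= 2 * (r + alpha) * (alpha - d)).
  { assert (0 <= (mu*alpha - d) * (2*alpha - mu*alpha - d)) by (apply Rmult_le_pos; lra).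
    assert (0 <= r * (alpha - mu * alpha)) by (apply Rmult_le_pos; lra). nra. }
  assert (Hmu2 : 1/2 <= mu) by nra.
  unfold E0c.
  assert (H2 : r * (alpha - c) <= 2 * (r + alpha) * (alpha - d)).
  { destruct (Rle_lt_dec c alpha).
    - assert (0 <= r * (mu - 1/2) * (alpha - c)) by (apply Rmult_le_pos; [apply Rmult_le_pos|]; lra).
      nra.
    - assert (0 <= r + alpha) by lra. assert (0 <= alpha - d) by lra.
      assert (r * (alpha - c) <= 0) by nra. nra. }
  apply Rmult_le_reg_l with r; [lra|].
  replace (r * (4 * alpha * (r + alpha) / r * (alpha - d))) with (2 * alpha * (2 * (r + alpha) * (alpha - d))) by (field; lra).
  nra.
Qed.


Lemma e_sq z x n alpha : dd x z = alpha * alpha -> dot n n = 1 ->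
  dd x (pp z alpha n) = 2 * alpha * (alpha - dot (psub x z) n).
Proof. intros H1 H2. destruct z, x, n; unfold dd, pp, dot, psub in *; simpl in *. nra. Qed.

Lemma dd_scale_pp z alpha n n' : 0 <= alpha -> edist (pp z alpha n) (pp z alpha n') = alpha * edist n n'.
Proof.
  intros Ha. unfold edist at 1, enorm.
  replace (dot (psub (pp z alpha n) (pp z alpha n')) (psub (pp z alpha n) (pp z alpha n')))
    with ((alpha*alpha) * dd n n') by (destruct z, n, n'; unfold dd, pp, dot, psub; simpl; ring).
  rewrite sqrt_mult_alt by nra. rewrite sqrt_square by lra. reflexivity.
Qed.

Lemma edist_aff_same z x1 x2 mu : 0 <= mu -> edist (aff z x1 mu) (aff z x2 mu) = mu * edist x1 x2.
Proof.
  intros Hm. unfold edist at 1, enorm.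
  replace (dot (psub (aff z x1 mu) (aff z x2 mu)) (psub (aff z x1 mu) (aff z x2 mu)))
    with ((mu*mu) * dd x1 x2) by (destruct z, x1, x2; unfold dd, aff, dot, psub; simpl; ring).
  rewrite sqrt_mult_alt by nra. rewrite sqrt_square by lra. reflexivity.
Qed.

Lemma pair_bound r alpha d S z x1 x2 mu1 n1 mu2 n2 : 0 < r -> 0 < alpha ->
  sphere z alpha x1 -> sphere z alpha x2 ->
  0 <= mu1 <= 1 -> d <= mu1 * alpha -> dot n1 n1 = 1 ->
  (forall y, oball (pm (aff z x1 mu1) r n1) r y -> ~ S y) ->
  (forall y, oball (pp (aff z x1 mu1) r n1) r y -> S y) ->
  0 <= mu2 <= 1 -> d <= mu2 * alpha -> dot n2 n2 = 1 ->
  (forall y, oball (pm (aff z x2 mu2) r n2) r y -> ~ S y) ->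
  (forall y, oball (pp (aff z x2 mu2) r n2) r y -> S y) ->
  r * edist x1 x2 <= alpha * edist x1 x2 + alpha * (alpha - d) +
     r * (edist x1 (pp z alpha n1) + edist x2 (pp z alpha n2)).
Proof.
  intros Hr Ha Hx1 Hx2 Hm1 Hd1 Hn1 O1 I1 Hm2 Hd2 Hn2 O2 I2.
  pose proof (normal_lip r S _ _ _ _ Hr Hn1 Hn2 O1 I1 O2 I2) as NL.
  set (N := edist n1 n2). set (P := edist (aff z x1 mu1) (aff z x2 mu2)).
  assert (HN : r * N <= P).
  { apply Rsqr_incr_0_var. unfold Rsqr. replace (r * N * (r * N)) with (r * r * (N * N)) by ring.
    unfold N, P. rewrite !edist_sq. exact NL. apply edist_nonneg. }
  assert (HP : P <= edist x1 x2 + (alpha - d)).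
  { unfold P. eapply Rle_trans. apply (edist_tri _ (aff z x2 mu1)).
    rewrite edist_aff_same by lra. rewrite edist_aff. unfold sphere in Hx2.
    rewrite (edist_sym z x2), Hx2. pose proof (edist_nonneg x1 x2).
    assert (Rabs (mu1 - mu2) * alpha <= alpha - d).
    { unfold Rabs; destruct (Rcase_abs (mu1 - mu2)); nra. }
    nra. }
  assert (HL : edist x1 x2 <= edist x1 (pp z alpha n1) + alpha * N + edist x2 (pp z alpha n2)).
  { eapply Rle_trans. apply (edist_tri _ (pp z alpha n1)).
    eapply Rle_trans. apply Rplus_le_compat_l. apply (edist_tri _ (pp z alpha n2)).
    rewrite dd_scale_pp by lra. rewrite (edist_sym (pp z alpha n2) x2). fold N. lra. }
  assert (r * edist x1 x2 <= r * edist x1 (pp z alpha n1) + r * (alpha * N) + r * edist x2 (pp z alpha n2)) by nra.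
  nra.
Qed.


Lemma abs_split a b : Rabs a <= b -> - b <= a <= b.
Proof. unfold Rabs; destruct (Rcase_abs a); lra. Qed.

Lemma dot_bound z x n alpha : sphere z alpha x -> dot n n = 1 -> Rabs (dot (psub x z) n) <= alpha.
Proof.
  intros Hx Hn. pose proof (cauchy_schwarz (psub x z) n).
  assert (enorm n = 1) by (unfold enorm; rewrite Hn; apply sqrt_1).
  fold (edist x z) in H. unfold sphere in Hx. rewrite Hx, H0 in H. lra.
Qed.

Lemma seg_inner r alpha d z x1 x2 mu1 n1 lam : 0 < r -> 0 < alpha ->
  sphere z alpha x1 -> sphere z alpha x2 ->
  0 <= mu1 <= 1 -> d <= mu1 * alpha -> dot n1 n1 = 1 -> 0 <= lam <= 1 ->
  dd (aff x1 x2 lam) (pp (aff z x1 mu1) r n1) <=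
    r * r + (alpha - d) * (alpha - d) + 2 * r * (alpha - d) + edist x1 x2 * edist x1 x2 +
    r * ((edist x1 x2 + edist x1 (pp z alpha n1)) * (edist x1 x2 + edist x1 (pp z alpha n1))) / alpha.
Proof.
  intros Hr Ha Hx1 Hx2 Hm Hd Hn Hl.
  set (c1 := dot (psub x1 z) n1). set (c12 := dot (psub x2 z) n1).
  set (L := edist x1 x2). set (e1 := edist x1 (pp z alpha n1)).
  assert (Id : dd (aff x1 x2 lam) (pp (aff z x1 mu1) r n1) =
     (1-mu1)^2 * dd x1 z + lam^2 * dd x1 x2 + r^2 * dot n1 n1 +
     2*(1-mu1)*lam*(dot (psub x1 z) (psub x2 z) - dd x1 z) - 2*r*(1-mu1)*c1 - 2*r*lam*(c12 - c1)).
  { unfold c1, c12; destruct z, x1, x2, n1; unfold dd, aff, pp, dot, psub; simpl; ring. }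
  pose proof (edist_eq_sq _ _ _ Hx1) as S1. pose proof (edist_eq_sq _ _ _ Hx2) as S2.
  assert (Hdd : dd x1 x2 = dd x1 z + dd x2 z - 2 * dot (psub x1 z) (psub x2 z))
    by (destruct z, x1, x2; unfold dd, dot, psub; simpl; ring).
  rewrite Id, Hn. rewrite <- (edist_sq x1 x2) in *. fold L in Hdd |- *.
  pose proof (dot_bound _ _ _ _ Hx1 Hn) as B1. pose proof (dot_bound _ _ _ _ Hx2 Hn) as B2.
  fold c1 in B1. fold c12 in B2. apply abs_split in B1; apply abs_split in B2.
  assert (Hw : edist x2 (pp z alpha n1) <= L + e1).
  { eapply Rle_trans; [apply (edist_tri x2 x1)|]. rewrite (edist_sym x2 x1). unfold L, e1. lra. }
  pose proof (edist_nonneg x2 (pp z alpha n1)).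
  apply edist_sq_le in Hw. rewrite (e_sq z x2 n1 alpha S2 Hn) in Hw. fold c12 in Hw.
  assert (H3 : 2 * r * lam * (c1 - c12) <= r * ((L + e1) * (L + e1)) / alpha).
  { apply Rmult_le_reg_l with alpha; [lra|].
    replace (alpha * (r * ((L + e1) * (L + e1)) / alpha)) with (r * ((L + e1) * (L + e1))) by (field; lra).
    assert (0 <= lam * (alpha - c12)) by (apply Rmult_le_pos; lra).
    assert (lam * (c1 - c12) <= alpha - c12) by nra.
    assert (alpha * (2 * r * lam * (c1 - c12)) <= r * (2 * alpha * (alpha - c12))).
    { replace (alpha * (2 * r * lam * (c1 - c12))) with ((2 * r * alpha) * (lam * (c1 - c12))) by ring.
      replace (r * (2 * alpha * (alpha - c12))) with ((2 * r * alpha) * (alpha - c12)) by ring.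
      apply Rmult_le_compat_l; nra. }
    assert (r * (2 * alpha * (alpha - c12)) <= r * ((L + e1) * (L + e1))) by (apply Rmult_le_compat_l; lra).
    lra. }
  assert (H4 : (1 - mu1) * alpha <= alpha - d) by nra.
  assert (H5 : 0 <= (1 - mu1) * alpha) by nra.
  assert (H6 : - 2 * r * (1 - mu1) * c1 <= 2 * r * (alpha - d)).
  { assert (0 <= r * (1 - mu1) * (alpha + c1)) by (apply Rmult_le_pos; [apply Rmult_le_pos|]; lra). nra. }
  assert (H7 : 2 * (1 - mu1) * lam * (dot (psub x1 z) (psub x2 z) - alpha * alpha) <= 0).
  { assert (HH : dot (psub x1 z) (psub x2 z) - alpha * alpha = - (L * L) / 2) by lra.
    rewrite HH. assert (0 <= (1 - mu1) * lam) by (apply Rmult_le_pos; lra).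
    assert (0 <= L * L) by nra.
    replace (2 * (1 - mu1) * lam * (- (L * L) / 2)) with (-(((1-mu1)*lam)*(L*L))) by field.
    assert (0 <= ((1-mu1)*lam)*(L*L)) by (apply Rmult_le_pos; lra). lra. }
  assert (H8 : lam ^ 2 * (L * L) <= L * L).
  { assert (0 <= L * L) by nra. assert (lam^2 <= 1) by nra.
    assert (lam^2 * (L*L) <= 1 * (L*L)) by (apply Rmult_le_compat_r; lra). lra. }
  assert (H9 : (1 - mu1) ^ 2 * (alpha * alpha) <= (alpha - d) * (alpha - d)).
  { replace ((1 - mu1) ^ 2 * (alpha * alpha)) with (((1-mu1)*alpha)*((1-mu1)*alpha)) by ring.
    apply Rmult_le_compat; lra. }
  rewrite S1. lra.
Qed.


Lemma acos_le_cos y s : -1 <= y <= 1 -> 0 <= s <= PI -> cos s <= y -> acos y <= s.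
Proof.
  intros Hy Hs Hc. pose proof (acos_bound y). pose proof (cos_acos y Hy).
  destruct (Rle_lt_dec (acos y) s); auto.
  pose proof (cos_decreasing_1 s (acos y) ltac:(lra) ltac:(lra) ltac:(lra) ltac:(lra) r). lra.
Qed.

Lemma angle_final t y : 0 < t -> -1 <= y <= 1 -> 1 - t/3 <= y -> 0 <= y -> acos y <= sqrt t.
Proof.
  intros Ht Hy H1 H0. pose proof PI_RGT_0. pose proof PI_4.
  set (s := sqrt t). assert (Hs : s * s = t) by (apply sqrt_sqrt; lra).
  assert (Hs0 : 0 <= s) by apply sqrt_pos.
  destruct (Rle_lt_dec s (PI/2)).
  - apply acos_le_cos; [lra|lra|].
    destruct (COS s ltac:(lra) r) as [_ Hc]. rewrite cos_ub_eq in Hc.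
    assert (s*s <= 4) by nra.
    assert (s^4/24 <= s^2/6) by nra.
    assert (s^8/40320 <= s^6/720) by nra.
    assert (s^2 = t) by (rewrite <- Hs; ring). lra.
  - assert (acos y <= PI/2); [|lra]. apply acos_le_cos; [lra|lra|]. rewrite cos_PI2. lra.
Qed.

Lemma perp_id u1 u2 m1 m2 v1 v2 n1 n2 : u1*m1+u2*m2 = 0 -> v1*n1+v2*n2=0 -> n1*n1+n2*n2 = 1 ->
  0 < m1*m1+m2*m2 ->
  (u1*v1+u2*v2)^2*(m1*m1+m2*m2) = (m1*n1+m2*n2)^2*(u1*u1+u2*u2)*(v1*v1+v2*v2).
Proof.
  intros Hu Hv Hn Hm.
  set (Mm := m1*m1+m2*m2).
  set (a := m2*u1 - m1*u2). set (b := n2*v1 - n1*v2).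
  assert (I1 : Mm*(u1*u1+u2*u2) = (u1*m1+u2*m2)^2 + a^2) by (unfold Mm, a; ring).
  assert (I2 : (v1*v1+v2*v2)*(n1*n1+n2*n2) = (v1*n1+v2*n2)^2 + b^2) by (unfold b; ring).
  assert (I3 : Mm*(n1*n1+n2*n2)*(u1*v1+u2*v2) = (u1*m1+u2*m2)*(v1*n1+v2*n2)*(m1*n1+m2*n2)
     + (u1*m1+u2*m2)*b*(m1*n2-m2*n1) + a*(v1*n1+v2*n2)*(m2*n1-m1*n2) + a*b*(m1*n1+m2*n2))
    by (unfold Mm, a, b; ring).
  rewrite Hu, Hv, Hn in *.
  apply Rmult_eq_reg_l with Mm; [|apply Rgt_not_eq; exact Hm].
  replace (Mm * ((u1 * v1 + u2 * v2) ^ 2 * Mm)) with ((Mm * 1 * (u1 * v1 + u2 * v2))^2) by ring.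
  rewrite I3. replace (v1 * v1 + v2 * v2) with ((v1 * v1 + v2 * v2) * 1) by ring. rewrite I2.
  replace (Mm * ((m1 * n1 + m2 * n2) ^ 2 * (u1 * u1 + u2 * u2) * ((0 ^ 2 + b ^ 2))))
    with ((m1 * n1 + m2 * n2) ^ 2 * (Mm * (u1 * u1 + u2 * u2)) * (0 ^ 2 + b ^ 2)) by ring.
  rewrite I1. ring.
Qed.


Lemma enorm_pos v : v <> (0,0) -> 0 < enorm v.
Proof.
  intros H. unfold enorm. apply sqrt_lt_R0. destruct v as [v1 v2]; unfold dot; simpl.
  destruct (Req_dec v1 0); destruct (Req_dec v2 0); [subst; tauto| nra | nra | nra].
Qed.

Lemma edist_pos x y : x <> y -> 0 < edist x y.
Proof.
  intros H. apply enorm_pos. intro E. apply H. destruct x, y; unfold psub in E; simpl in E.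
  injection E; intros; f_equal; lra.
Qed.

Lemma sq_eq_pos a b : 0 <= a -> 0 <= b -> a * a = b * b -> a = b.
Proof. intros. nra. Qed.

Lemma sqrt_bound L t : 0 <= L -> L * L <= t -> L <= sqrt t.
Proof. intros. rewrite <- (sqrt_square L) by lra. apply sqrt_le_1_alt; lra. Qed.

Lemma sum3 a b c : (a+b+c)*(a+b+c) <= 3*(a*a+b*b+c*c).
Proof. pose proof (pow2_ge_0 (a-b)); pose proof (pow2_ge_0 (a-c)); pose proof (pow2_ge_0 (b-c)). nra. Qed.

Lemma perp_id_pt u m v n : dot u m = 0 -> dot v n = 0 -> dot n n = 1 -> 0 < dot m m ->
  (dot u v)^2 * dot m m = (dot m n)^2 * dot u u * dot v v.
Proof. destruct u, m, v, n; unfold dot; simpl. apply perp_id. Qed.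

Theorem lemma5 :
  forall r alpha : R, 0 < r -> 0 < alpha < r ->
  exists A : R, 0 < A /\
  forall (S : pt -> Prop) (t : R),
    rolling r S -> rolling r (compl S) ->
    0 < t <= Rmin alpha (2 * alpha ^ 2 / r) ->
    forall z x1 x2 : pt,
      ~ S z ->
      0 < alpha - setdist z S <= t / A ->
      sphere z alpha x1 -> S x1 ->
      sphere z alpha x2 -> S x2 ->
      (forall x, segment x1 x2 x -> nbhd (boundary S) t x) /\
      edist x1 x2 <= sqrt t /\
      (x1 <> x2 ->
       forall x p v, segment x1 x2 x -> is_proj (boundary S) x p ->
         tangent_dir (boundary S) p v ->
         line_angle (psub x2 x1) v <= sqrt t).
Proof.
  intros r alpha Hr [Ha Har].
  set (E0 := E0c r alpha).
  assert (HE0 : 0 < E0) by (unfold E0, E0c; apply Rdiv_lt_0_compat; nra).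
  set (CL := 3 * (alpha^3 + 2 * r^2 * E0) / (r - alpha)^2).
  assert (Ha3 : 0 < alpha^3) by (apply pow_lt; lra).
  assert (Hr2 : 0 < r^2) by (apply pow_lt; lra).
  assert (Ha2 : 0 < alpha^2) by (apply pow_lt; lra).
  assert (HCL : 0 < CL).
  { unfold CL; apply Rdiv_lt_0_compat; [|apply pow_lt; lra].
    assert (0 < r^2 * E0) by (apply Rmult_lt_0_compat; lra). lra. }
  set (K := (CL + 2 * r * (CL + E0) / alpha + 2 * r + alpha) / (2 * r)).
  assert (HK : 0 < K).
  { unfold K. apply Rdiv_lt_0_compat; [|lra].
    assert (0 < 2 * r * (CL + E0) / alpha) by (apply Rdiv_lt_0_compat; nra). lra. }
  set (Kb := K + 2).
  set (CP := 3 * (Kb^2 * alpha + CL + alpha)).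
  assert (HCP : 0 < CP) by (unfold CP; nra).
  set (CM := 3 * (CL + E0 + alpha^2 * CP / r^2)).
  assert (HCM : 0 < CM).
  { unfold CM. assert (0 < alpha^2 * CP / r^2) by (apply Rdiv_lt_0_compat; nra). lra. }
  set (C3 := (CL/4 + CM) / (2 * alpha^2)).
  assert (HC3 : 0 < C3) by (unfold C3; apply Rdiv_lt_0_compat; nra).
  set (A := 3 + CL + Kb + 3 * C3 + 2 * C3 * alpha).
  assert (HC3a : 0 < C3 * alpha) by (apply Rmult_lt_0_compat; lra).
  assert (HA : 0 < A) by (unfold A, Kb; lra).
  assert (HA3 : 3 <= A /\ CL <= A /\ Kb < A /\ 3 * C3 <= A /\ 2 * C3 * alpha <= A) by (unfold A, Kb in *; lra).
  exists A. split; [exact HA|].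
  intros S t HS HC Ht z x1 x2 Hz Hd Hx1 HS1 Hx2 HS2.
  set (d := setdist z S) in *. set (del := alpha - d) in *.
  assert (Hlb : forall y, S y -> d <= edist z y) by (apply setdist_lb with x1; auto).
  assert (Hta : t <= alpha) by (pose proof (Rmin_l alpha (2 * alpha ^ 2 / r)); lra).
  assert (HdA : del * A <= t).
  { destruct Hd as [_ Hd]. apply Rmult_le_compat_r with (r := A) in Hd; [|lra].
    replace (t / A * A) with t in Hd by (field; lra). lra. }
  assert (Hdel : 0 < del) by lra.
  assert (Hdel3 : del <= alpha / 3).
  { assert (del * 3 <= del * A) by (apply Rmult_le_compat_l; lra). lra. }
  assert (Hdr : alpha / 2 <= d <= alpha) by (unfold del in *; lra).
  destruct (point_data r alpha d S z x1 Hr Ha Hdr HS HC Hz Hlb Hx1 HS1)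
    as [mu1 [n1 [Hm1 [Hd1 [Hb1 [Hn1 [O1 [I1 He1]]]]]]]].
  destruct (point_data r alpha d S z x2 Hr Ha Hdr HS HC Hz Hlb Hx2 HS2)
    as [mu2 [n2 [Hm2 [Hd2 [Hb2 [Hn2 [O2 [I2 He2]]]]]]]].
  fold E0 in He1, He2. fold del in He1, He2.
  pose proof (pair_bound r alpha d S z x1 x2 mu1 n1 mu2 n2 Hr Ha Hx1 Hx2 Hm1 Hd1 Hn1 O1 I1 Hm2 Hd2 Hn2 O2 I2) as PB.
  fold del in PB.
  set (L := edist x1 x2) in *.
  set (e1 := edist x1 (pp z alpha n1)) in *. set (e2 := edist x2 (pp z alpha n2)) in *.
  assert (He1' : e1 * e1 <= E0 * del).
  { unfold e1. rewrite edist_sq. rewrite e_sq; [lra| |auto]. apply edist_eq_sq; auto. }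
  assert (He2' : e2 * e2 <= E0 * del).
  { unfold e2. rewrite edist_sq. rewrite e_sq; [lra| |auto]. apply edist_eq_sq; auto. }
  assert (HL0 : 0 <= L) by apply edist_nonneg.
  assert (He10 : 0 <= e1) by apply edist_nonneg.
  assert (He20 : 0 <= e2) by apply edist_nonneg.
  assert (Hdd : del * del <= alpha * del) by nra.
  assert (HLsq : L * L <= CL * del).
  { assert (X1 : (r - alpha) * L <= alpha * del + r * e1 + r * e2) by lra.
    assert (X2 : ((r - alpha) * L) * ((r - alpha) * L) <= (alpha * del + r * e1 + r * e2) * (alpha * del + r * e1 + r * e2)).
    { apply Rmult_le_compat; nra. }
    assert (X3 : (alpha * del + r * e1 + r * e2) * (alpha * del + r * e1 + r * e2) <=
                 3 * (alpha * alpha * (del * del) + r * r * (e1 * e1) + r * r * (e2 * e2))).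
    { pose proof (pow2_ge_0 (alpha * del - r * e1)). pose proof (pow2_ge_0 (alpha * del - r * e2)).
      pose proof (pow2_ge_0 (r * e1 - r * e2)). nra. }
    assert (X4 : 3 * (alpha * alpha * (del * del) + r * r * (e1 * e1) + r * r * (e2 * e2)) <=
                 3 * (alpha^3 + 2 * r^2 * E0) * del).
    { assert (alpha * alpha * (del * del) <= alpha * alpha * (alpha * del)) by (apply Rmult_le_compat_l; nra).
      assert (r * r * (e1 * e1) <= r * r * (E0 * del)) by (apply Rmult_le_compat_l; nra).
      assert (r * r * (e2 * e2) <= r * r * (E0 * del)) by (apply Rmult_le_compat_l; nra).
      nra. }
    assert (X5 : (L * L) * (r - alpha)^2 <= (CL * del) * (r - alpha)^2).
    { unfold CL. replace (3 * (alpha ^ 3 + 2 * r ^ 2 * E0) / (r - alpha) ^ 2 * del * (r - alpha) ^ 2)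
        with (3 * (alpha ^ 3 + 2 * r ^ 2 * E0) * del) by (field; lra). nra. }
    apply Rmult_le_reg_r with ((r - alpha)^2); [apply pow_lt; lra|exact X5]. }
  assert (G2 : forall lam, 0 <= lam <= 1 -> exists b, boundary S b /\ edist (aff x1 x2 lam) b <= Kb * del).
  { intros lam Hl.
    pose proof (seg_inner r alpha d z x1 x2 mu1 n1 lam Hr Ha Hx1 Hx2 Hm1 Hd1 Hn1 Hl) as SI.
    fold L e1 in SI. fold del in SI.
    assert (Q : edist (aff x1 x2 lam) (pp (aff z x1 mu1) r n1) <= r + K * del).
    { apply edist_le; [nra|]. eapply Rle_trans; [exact SI|].
      assert (R1 : (L + e1) * (L + e1) <= 2 * (CL + E0) * del)
        by (pose proof (pow2_ge_0 (L - e1)); nra).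
      assert (R2 : r * ((L + e1) * (L + e1)) / alpha <= 2 * r * (CL + E0) / alpha * del).
      { apply Rmult_le_reg_r with alpha; [lra|].
        replace (r * ((L + e1) * (L + e1)) / alpha * alpha) with (r * ((L + e1) * (L + e1))) by (field; lra).
        replace (2 * r * (CL + E0) / alpha * del * alpha) with (r * (2 * (CL + E0) * del)) by (field; lra).
        apply Rmult_le_compat_l; lra. }
      assert (R3 : 2 * r * K = CL + 2 * r * (CL + E0) / alpha + 2 * r + alpha) by (unfold K; field; lra).
      assert (0 <= K * del * (K * del)) by nra.
      nra. }
    destruct (ball_approach _ r _ (K * del) del ltac:(lra) ltac:(nra) Q) as [yin [Yin1 Yin2]].
    assert (SYin : S yin) by (apply I1; exact Yin1).
    assert (Hxz : edist (aff x1 x2 lam) z <= d + del).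
    { rewrite edist_sym. apply aff_dist_max; auto; unfold sphere in *; rewrite edist_sym; unfold del; lra. }
    destruct (ball_approach z d _ del del ltac:(lra) ltac:(lra) Hxz) as [yout [Yo1 Yo2]].
    assert (SYo : ~ S yout).
    { intro HSy. apply Hlb in HSy. rewrite edist_sym in HSy. lra. }
    destruct (seg_bnd S yout yin SYo SYin) as [m [Hm Hbm]].
    exists (aff yout yin m). split; auto. apply aff_dist_max; auto; unfold Kb; nra. }
  split; [|split].
  - intros x [l [Hl ->]]. destruct (G2 l Hl) as [b [Hb Hxb]]. exists b. split; auto.
    assert (Kb * del < A * del) by (apply Rmult_lt_compat_r; lra).
    unfold aff in Hxb. lra.
  - apply sqrt_bound; auto.
    assert (CL * del <= A * del) by (apply Rmult_le_compat_r; lra). lra.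
  - intros Hne x p v [l [Hl Hxe]] [Hpb Hpmin] Htan.
    assert (Hxa : x = aff x1 x2 l) by (rewrite Hxe; reflexivity).
    destruct (G2 l Hl) as [b [Hb Hxb]]. rewrite <- Hxa in Hxb.
    pose proof (Hpmin b Hb) as Hxp.
    destruct (normal_exists r S p Hr HS HC Hpb) as [n [Hn [On In]]].
    pose proof (tangent_perp r S p n v Hr Hn On In Htan) as Hvn.
    destruct Htan as [Hv0 _].
    pose proof (normal_lip r S _ _ _ _ Hr Hn1 Hn O1 I1 On In) as NL.
    set (p1 := aff z x1 mu1) in *.
    assert (Hp1x1 : edist p1 x1 <= del).
    { unfold p1. rewrite <- (aff1 z x1) at 2. rewrite edist_aff. rewrite Rabs_left1 by lra.
      unfold sphere in Hx1. rewrite edist_sym, Hx1. unfold del. lra. }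
    assert (Hx1x : edist x1 x <= L).
    { rewrite Hxa. rewrite <- (aff0 x1 x2) at 1. rewrite edist_aff. fold L.
      rewrite Rabs_left1 by lra. nra. }
    assert (Hpp : edist p1 p <= L + (Kb + 1) * del).
    { eapply Rle_trans. apply (edist_tri _ x1). eapply Rle_trans. apply Rplus_le_compat_l.
      apply (edist_tri _ x). lra. }
    set (N := edist n1 n).
    assert (HN0 : 0 <= N) by apply edist_nonneg.
    assert (HNsq : r * r * (N * N) <= CP * del).
    { unfold N. rewrite edist_sq. eapply Rle_trans; [exact NL|].
      rewrite <- edist_sq. eapply Rle_trans.
      { apply Rmult_le_compat; try apply edist_nonneg; exact Hpp. }
      replace (L + (Kb + 1) * del) with (L + Kb * del + del) by ring.
      eapply Rle_trans; [apply sum3|].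
      assert (Kb * del * (Kb * del) <= Kb^2 * alpha * del).
      { replace (Kb * del * (Kb * del)) with (Kb^2 * (del * del)) by ring.
        replace (Kb^2 * alpha * del) with (Kb^2 * (alpha * del)) by ring.
        apply Rmult_le_compat_l; [apply pow2_ge_0|lra]. }
      unfold CP. lra. }
    set (mz := aff x1 x2 (1/2)).
    set (G := edist mz (pp z alpha n)).
    assert (HG : G <= L + e1 + alpha * N).
    { unfold G. eapply Rle_trans. apply (edist_tri _ (pp z alpha n1)).
      rewrite dd_scale_pp by lra. fold N.
      assert (edist mz (pp z alpha n1) <= L + e1); [|lra].
      rewrite edist_sym. unfold mz. apply aff_dist_max; [lra| |].
      - rewrite edist_sym. fold e1. lra.
      - eapply Rle_trans. apply (edist_tri _ x1). rewrite (edist_sym _ x1). fold e1. fold L. lra. }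
    assert (HG0 : 0 <= G) by apply edist_nonneg.
    assert (HGsq : G * G <= CM * del).
    { assert (G * G <= (L + e1 + alpha * N) * (L + e1 + alpha * N)) by (apply Rmult_le_compat; lra).
      pose proof (sum3 L e1 (alpha * N)).
      assert (alpha ^ 2 * (N * N) <= alpha^2 * CP / r^2 * del).
      { apply Rmult_le_reg_r with (r^2); [lra|].
        replace (alpha ^ 2 * CP / r ^ 2 * del * r ^ 2) with (alpha^2 * (CP * del)) by (field; lra).
        replace (alpha ^ 2 * (N * N) * r ^ 2) with (alpha^2 * (r * r * (N * N))) by ring.
        apply Rmult_le_compat_l; lra. }
      replace (alpha * N * (alpha * N)) with (alpha ^ 2 * (N * N)) in H0 by ring.
      unfold CM. lra. }
    pose proof (edist_eq_sq _ _ _ Hx1) as S1. pose proof (edist_eq_sq _ _ _ Hx2) as S2.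
    set (Mn := dot (psub mz z) n).
    assert (IdG : G * G = dd mz z - 2 * alpha * Mn + alpha * alpha).
    { unfold G. rewrite edist_sq.
      assert (dd mz (pp z alpha n) = dd mz z - 2 * alpha * Mn + alpha * alpha * dot n n)
        by (unfold Mn; destruct mz, z, n; unfold dd, pp, dot, psub; simpl; ring).
      rewrite Hn in H. lra. }
    assert (IdM : dd mz z = alpha * alpha - L * L / 4).
    { unfold L. rewrite edist_sq.
      assert (dd mz z = (dd x1 z + dd x2 z) / 2 - dd x1 x2 / 4)
        by (unfold mz; destruct z, x1, x2; unfold dd, aff, dot, psub; simpl; field).
      lra. }
    assert (HMn : alpha * (1 - C3 * del) <= Mn).
    { assert (E2 : 2 * alpha * Mn = 2 * alpha * alpha - L * L / 4 - G * G) by lra.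
      assert (E3 : 2 * alpha^2 * C3 = CL / 4 + CM) by (unfold C3; field; lra).
      apply Rmult_le_reg_l with (2 * alpha); [lra|]. rewrite E2.
      replace (2 * alpha * (alpha * (1 - C3 * del))) with (2 * alpha * alpha - (2 * alpha^2 * C3) * del) by ring.
      rewrite E3. lra. }
    assert (HC3d : C3 * del <= t / 3 /\ C3 * del <= 1/2).
    { split.
      - assert (3 * C3 * del <= A * del) by (apply Rmult_le_compat_r; lra). lra.
      - assert (2 * C3 * alpha * del <= A * del) by (apply Rmult_le_compat_r; lra).
        assert (Q1 : alpha * (2 * C3 * del) <= alpha * 1) by lra.
        apply Rmult_le_reg_l in Q1; lra. }
    assert (HMnpos : 0 < Mn).
    { assert (0 < alpha * (1 - C3 * del)) by (apply Rmult_lt_0_compat; lra). lra. }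
    set (u := psub x2 x1).
    assert (Hu : 0 < enorm u) by (apply edist_pos; auto).
    assert (Hv : 0 < enorm v) by (apply enorm_pos; auto).
    set (nm := edist mz z).
    assert (Hnm : nm <= alpha).
    { unfold nm. rewrite edist_sym. unfold mz. apply aff_dist_max; [lra| |];
      unfold sphere in *; rewrite edist_sym; lra. }
    assert (Hnm0 : 0 <= nm) by apply edist_nonneg.
    assert (Hen : enorm n = 1) by (unfold enorm; rewrite Hn; apply sqrt_1).
    assert (HMnm : Mn <= nm).
    { pose proof (cauchy_schwarz (psub mz z) n). fold Mn in H. rewrite Hen in H.
      fold (edist mz z) in H. fold nm in H. pose proof (Rle_abs Mn). lra. }
    assert (Hmm : 0 < dot (psub mz z) (psub mz z)).
    { fold (dd mz z). rewrite <- edist_sq. fold nm. apply Rmult_lt_0_compat; lra. }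
    assert (Hum : dot u (psub mz z) = 0).
    { assert (dot u (psub mz z) = (dd x2 z - dd x1 z) / 2)
        by (unfold u, mz; destruct z, x1, x2; unfold dd, aff, dot, psub; simpl; field).
      lra. }
    pose proof (perp_id_pt u (psub mz z) v n Hum Hvn Hn Hmm) as PI1.
    fold Mn in PI1. fold (dd mz z) in PI1. rewrite <- (edist_sq mz z) in PI1. fold nm in PI1.
    rewrite <- !enorm_sq in PI1.
    assert (Eq : Rabs (dot u v) * nm = Mn * (enorm u * enorm v)).
    { apply sq_eq_pos; [apply Rmult_le_pos; [apply Rabs_pos|lra]|apply Rmult_le_pos; [lra|apply Rmult_le_pos; lra]|].
      replace (Rabs (dot u v) * nm * (Rabs (dot u v) * nm)) with ((Rabs (dot u v) * Rabs (dot u v)) * (nm * nm)) by ring.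
      rewrite <- Rabs_mult, Rabs_right by (apply Rle_ge; apply Rle_0_sqr).
      replace (dot u v * dot u v * (nm * nm)) with ((dot u v)^2 * (nm * nm)) by ring.
      rewrite PI1. ring. }
    set (R := Rabs (dot u v) / (enorm u * enorm v)).
    assert (HR : R * nm = Mn).
    { unfold R. apply Rmult_eq_reg_r with (enorm u * enorm v); [|apply Rgt_not_eq; apply Rmult_lt_0_compat; lra].
      replace (Rabs (dot u v) / (enorm u * enorm v) * nm * (enorm u * enorm v)) with (Rabs (dot u v) * nm)
        by (field; split; apply Rgt_not_eq; lra). rewrite Eq. ring. }
    assert (HR0 : 0 <= R) by (unfold R; apply Rle_mult_inv_pos; [apply Rabs_pos|apply Rmult_lt_0_compat; lra]).
    assert (HR1 : R <= 1).
    { unfold R. apply Rmult_le_reg_r with (enorm u * enorm v); [apply Rmult_lt_0_compat; lra|].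
      replace (Rabs (dot u v) / (enorm u * enorm v) * (enorm u * enorm v)) with (Rabs (dot u v)) by (field; split; apply Rgt_not_eq; lra).
      pose proof (cauchy_schwarz u v). lra. }
    assert (HRb : 1 - t / 3 <= R).
    { assert (Mn <= R * alpha) by (rewrite <- HR; apply Rmult_le_compat_l; lra).
      assert (alpha * (1 - t/3) <= alpha * (1 - C3 * del)) by (apply Rmult_le_compat_l; lra).
      assert (Q2 : alpha * (1 - t/3) <= alpha * R) by lra.
      apply Rmult_le_reg_l in Q2; lra. }
    unfold line_angle. fold u. fold R.
    apply angle_final; lra.
Qed.
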